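(* Let $\alpha>1$ and constants $0<c\le C$ and $c_0>0$. Consider, for each $N\ge2$, a number of tasks $K=K(N)\ge c_0N$ and test proportions ${\bm{p}}={\bm{p}}^{(N)}\in\Delta_K$ with $c\,k^{-\alpha}\le p_k\le C\,k^{-\alpha}$ for all $k\le K$. For the memorization model with $L_N({\bm{p}},{\bm{q}})=\sum_{k=1}^K p_k(1-q_k)^N$, $L^{\mathrm{same}}({\bm{p}})=L_N({\bm{p}},{\bm{p}})$ and $L^*({\bm{p}})=\min_{{\bm{q}}\in\Delta_K}L_N({\bm{p}},{\bm{q}})$, we have, as $N\to\infty$, $$L^{\mathrm{same}}({\bm{p}})=\Theta\!\left(N^{-1+\frac{1}{\alpha}}\right),\qquad L^*({\bm{p}})=\Theta\!\left(N^{-\alpha+1}\right),$$ where the implied constants depend only on $\alpha,c,C,c_0$.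
   Context: $\Delta_K=\{{\bm{r}}\in\mathbb{R}^K:{\bm{r}}\ge0,\ \sum_k r_k=1\}$. Memorization model: each of $K$ tasks is memorizing a unique atom; the test distribution is the mixture of the tasks with proportions ${\bm{p}}$; training uses $N$ i.i.d. samples from the mixture with proportions ${\bm{q}}$, and the error on task $k$ is $1$ if no training example from task $k$ was seen and $0$ otherwise, giving the expected test loss $L_N({\bm{p}},{\bm{q}})=\sum_k p_k(1-q_k)^N$. The paper states the hypotheses as $p_k=\Theta(k^{-\alpha})$ and $K=\Omega(N)$. *)

(* Defs.v *)
From mathcomp Require Import all_boot all_order all_algebra.
From mathcomp Require Import all_classical all_reals all_analysis.
Set Implicit Arguments. Unset Strict Implicit. Unset Printing Implicit Defensive.
Import Order.TTheory GRing.Theory Num.Theory.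
Local Open Scope ring_scope.
Local Open Scope classical_set_scope.

(* Tasks are indexed by i : 'I_K, standing for task k = i+1 in {1,...,K}. *)

Definition simplex (R : realType) (K : nat) : set ('I_K -> R) :=
  [set r | (forall i, 0 <= r i) /\ \sum_(i < K) r i = 1].

Definition LN (R : realType) (N K : nat) (p q : 'I_K -> R) : R :=
  \sum_(i < K) p i * (1 - q i) ^+ N.

Definition Lsame (R : realType) (N K : nat) (p : 'I_K -> R) : R := LN N p p.

(* L^*(p) = min_{q in Delta_K} L_N(p,q)  (the minimum is attained; we use inf). *)
Definition Lstar (R : realType) (N K : nat) (p : 'I_K -> R) : R :=
  inf [set LN N p q | q in @simplex R K].

(* Main.v *)
Require Import Defs.
From mathcomp Require Import all_boot all_order all_algebra.
From mathcomp Require Import all_classical all_reals all_analysis.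
From mathcomp Require Import ring lra.
Set Implicit Arguments. Unset Strict Implicit.
Import Order.TTheory GRing.Theory Num.Theory.
Local Open Scope ring_scope.

Lemma pow_le_exp (R : realType) (x : R) (N : nat) :
  0 <= x <= 1 -> (1 - x) ^+ N <= expR (- (N%:R * x)).
Proof.
move=> /andP[x0 x1].
rewrite -mulrN expRM_natl; apply: lerXn2r.
- by rewrite nnegrE subr_ge0.
- by rewrite nnegrE expR_ge0.
- by have := expR_ge1Dx (- x); rewrite addrC.
Qed.

Lemma exp_le_1m (R : realType) (x : R) :
  0 <= x <= 2^-1 -> expR (- (2 * x)) <= 1 - x.
Proof.
move=> /andP[x0 x1].
have h1x : 0 < 1 - x by lra.
set y := x / (1 - x).
have hy : y <= 2 * x.
  rewrite /y ler_pdivrMr //; nra.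
have e1 : 1 + y <= expR y := expR_ge1Dx y.
have e2 : 1 + y = (1 - x)^-1 by rewrite /y; field; lra.
apply: (le_trans (y := expR (- y))); first by rewrite ler_expR lerN2.
rewrite expRN -[1 - x]invrK lef_pV2 ?posrE ?expR_gt0 ?invr_gt0 //.
by rewrite -e2.
Qed.

Lemma exp_le_pow (R : realType) (x : R) (N : nat) :
  0 <= x <= 2^-1 -> expR (- (2 * N%:R * x)) <= (1 - x) ^+ N.
Proof.
move=> hx; have := exp_le_1m hx => h.
rewrite (_ : 2 * N%:R * x = N%:R * (2 * x)); last by ring.
rewrite -mulrN expRM_natl; apply: lerXn2r => //.
- by rewrite nnegrE expR_ge0.
- case/andP: hx => ? ?; rewrite nnegrE; lra.
Qed.

Lemma xexp_le (R : realType) (x n : R) :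
  0 <= x -> 0 < n -> x * expR (- (n * x)) <= n^-1.
Proof.
move=> x0 n0.
have h := expR_ge1Dx (n * x).
rewrite expRN ler_pdivrMr ?expR_gt0 // ler_pdivlMl //.
nra.
Qed.


Lemma tail_term (R : realType) (a : R) (i : nat) : 0 < a -> (1 <= i)%N ->
  a * (i.+1%:R `^ (-(a+1))) <= i%:R `^ (-a) - i.+1%:R `^ (-a).
Proof.
move=> a0 i1.
set x : R := i.+1%:R.
have x0 : 0 < x by rewrite /x ltr0n.
have ipos : 0 < i%:R :> R by rewrite ltr0n.
set u := i%:R / x.
have u0 : 0 < u by rewrite /u divr_gt0.
have ix : i%:R = u * x by rewrite /u mulrVK // unitfE gt_eqF.
have hu : 1 - u = x^-1.
  have xe : x = i%:R + 1 by rewrite /x mulrS addrC.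
  rewrite /u xe; field; lra.
have lnu : ln u <= u - 1.
  have := @le_ln1Dx R (u - 1); rewrite (_ : 1 + (u - 1) = u); [apply; lra | ring].
have hpu : 1 + a * x^-1 <= u `^ (-a).
  rewrite /powR gt_eqF //.
  apply: le_trans (expR_ge1Dx _).
  rewrite -hu lerD2l; nra.
have hxa : x `^ (-(a+1)) = x `^ (-a) * x^-1.
  rewrite opprD powRD ?powR_inv1 ?(ltW x0) //.
  by apply/implyP => _; rewrite gt_eqF.
rewrite ix powRM ?(ltW u0) ?(ltW x0) // hxa.
have := powR_gt0 (-a) x0 => hp.
have := ler_wpM2r (ltW hp) hpu.
move: (x^-1) (u `^ (-a)) (x `^ (-a)) => X U P; nra.
Qed.

Lemma tail_sum (R : realType) (alpha : R) (m L : nat) : 1 < alpha ->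
  (1 <= m)%N -> (m <= L)%N ->
  \sum_(m <= i < L) (i.+1%:R `^ (- alpha)) <= m%:R `^ (-(alpha - 1)) / (alpha - 1).
Proof.
move=> a1 m1 mL.
have a0 : 0 < alpha - 1 by lra.
rewrite ler_pdivlMr //.
apply: (@le_trans _ _ (\sum_(m <= i < L) (i%:R `^ (-(alpha - 1)) - i.+1%:R `^ (-(alpha-1))))).
  rewrite mulr_suml; apply: ler_sum_nat => i /andP[mi _].
  rewrite mulrC; have := tail_term (i := i) a0 (leq_trans m1 mi).
  by rewrite subrK.
have := telescope_sumr (fun k => - (k%:R `^ (-(alpha - 1)) : R)) mL.
under eq_bigr do rewrite opprK addrC.
move=> ->.
have := powR_ge0 L%:R (- (alpha - 1)); lra.
Qed.


Ltac nz := repeat (apply/andP; split); rewrite ?(addrC 1) ?natr1 ?pnatr_eq0 //.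

Lemma lnsum (R : realType) (m : nat) :
  \sum_(i < m) ln (m%:R / i.+1%:R : R) <= m%:R.
Proof.
elim: m => [|m IH]; first by rewrite big_ord0.
rewrite big_ord_recr /= divff ?pnatr_eq0 // ln1 addr0.
case: m IH => [|m] IH; first by rewrite big_ord0.
have h : forall i : 'I_m.+1, ln (m.+2%:R / i.+1%:R : R) =
    ln (m.+2%:R / m.+1%:R) + ln (m.+1%:R / i.+1%:R).
  move=> i; rewrite -lnM ?posrE ?divr_gt0 ?ltr0n //.
  congr ln; field; nz.
under eq_bigr do rewrite h.
rewrite big_split /= sumr_const card_ord.
have l1 : ln (m.+2%:R / m.+1%:R : R) <= m.+1%:R^-1.
  rewrite (_ : m.+2%:R / m.+1%:R = 1 + m.+1%:R^-1 :> R).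
    apply: le_ln1Dx; have : 0 < m.+1%:R^-1 :> R by rewrite invr_gt0 ltr0n.
    by move=> hh; apply: lt_trans hh; rewrite ltrN10.
  rewrite -natr1; field; nz.
have : ln (m.+2%:R / m.+1%:R : R) *+ m.+1 <= 1.
  rewrite -[_ *+ m.+1]mulr_natr.
  have hm : 0 < m.+1%:R :> R by rewrite ltr0n.
  apply: le_trans (ler_wpM2r (ltW hm) l1) _; rewrite mulVf ?gt_eqF //.
rewrite -[m.+2%:R]natr1.
lra.
Qed.

Lemma le_sum_single (R : realType) (K : nat) (F : 'I_K -> R) (j : 'I_K) :
  (forall i, 0 <= F i) -> F j <= \sum_(i < K) F i.
Proof.
move=> F0; rewrite (bigD1 j) //= lerDl; exact: sumr_ge0.
Qed.

Lemma sum_extend (R : realType) (g : nat -> R) (K L : nat) :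
  (forall j, 0 <= g j) -> (K <= L)%N ->
  \sum_(i < K) g i <= \sum_(0 <= i < L) g i.
Proof.
move=> g0 KL; rewrite -(big_mkord xpredT) (@big_cat_nat _ _ _ K 0 L) //= lerDl.
exact: sumr_ge0.
Qed.

Lemma pow_anti (R : realType) (x y r : R) :
  0 < x -> x <= y -> 0 <= r -> y `^ (- r) <= x `^ (- r).
Proof.
move=> x0 xy r0; rewrite !powRN lef_pV2 ?posrE ?powR_gt0 //; last exact: lt_le_trans xy.
apply: ge0_ler_powR => //; rewrite nnegrE; [exact: ltW | exact: (ltW (lt_le_trans x0 xy))].
Qed.

Lemma powRD' (R : realType) (x r s : R) : 0 < x -> x `^ (r + s) = x `^ r * x `^ s.
Proof. by move=> x0; rewrite powRD //; apply/implyP => _; rewrite gt_eqF. Qed.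


Lemma pow_beta (R : realType) (alpha n : R) : 1 < alpha -> 0 < n ->
  n `^ (-1 + alpha^-1) = n^-1 * n `^ alpha^-1.
Proof.
move=> a1 n0; rewrite powRD' // powR_inv1 //; exact: ltW.
Qed.

Lemma pow_beta2 (R : realType) (alpha n : R) : 1 < alpha -> 0 < n ->
  (n `^ alpha^-1) `^ (-(alpha - 1)) = n `^ (-1 + alpha^-1).
Proof.
move=> a1 n0; rewrite -powRrM; congr (_ `^ _); field; lra.
Qed.

Lemma lsame_upper (R : realType) (alpha C : R) (N K : nat) (p : 'I_K -> R) :
  1 < alpha -> 0 < C -> (1 <= N)%N -> simplex p ->
  (forall i, p i <= C * i.+1%:R `^ (-alpha)) ->
  Lsame N p <= (1 + C * (2^-1) `^ (-(alpha-1)) / (alpha - 1)) * N%:R `^ (-1 + alpha^-1).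
Proof.
move=> a1 C0 N1 [p0 psum] pC.
set n : R := N%:R.
have n1 : 1 <= n by rewrite /n ler1n.
have n0 : 0 < n by lra.
have p1 : forall i, p i <= 1 by move=> i; rewrite -psum; apply: le_sum_single.
set s := n `^ alpha^-1.
have s1 : 1 <= s.
  rewrite /s -(powRr0 n); apply: ler_powR => //; rewrite invr_ge0; lra.
set m := Num.truncn s.
have /andP[ms sm] : m%:R <= s < m.+1%:R by apply: truncn_itv; lra.
have m1 : (1 <= m)%N by rewrite /m truncn_ge_nat //; lra.
set h := fun j : nat => if (j < m)%N then n^-1 else C * j.+1%:R `^ (-alpha).
have stepA : Lsame N p <= \sum_(i < K) h i.
  rewrite /Lsame /LN; apply: ler_sum => i _; rewrite /h; case: ifP => _.
  - apply: le_trans (xexp_le (p0 i) n0).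
    apply: ler_wpM2l; first exact: p0.
    by apply: pow_le_exp; rewrite p0 p1.
  - apply: le_trans (pC i); apply: ler_piMr => //.
    apply: exprn_ile1; [rewrite subr_ge0 // | have := p0 i; lra].
have h0 : forall j, 0 <= h j.
  move=> j; rewrite /h; case: ifP => _; first by rewrite invr_ge0 ltW.
  by rewrite mulr_ge0 ?powR_ge0 // ltW.
apply: le_trans stepA _.
apply: le_trans (sum_extend h0 (leq_addl m K)) _.
rewrite (@big_cat_nat _ _ _ m 0 (m+K)) //=; last exact: leq_addr.
have e1 : \sum_(0 <= i < m) h i = m%:R * n^-1.
  rewrite (eq_big_nat _ _ (F2 := fun=> n^-1)); first by rewrite sumr_const_nat subn0 mulr_natl.
  by move=> i /andP[_ im]; rewrite /h im.
have e2 : \sum_(m <= i < m + K) h i = C * \sum_(m <= i < m + K) i.+1%:R `^ (-alpha).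
  rewrite mulr_sumr; apply: eq_big_nat => i /andP[mi _]; rewrite /h ltnNge mi.
  by [].
rewrite e1 e2.
have T := tail_sum a1 m1 (leq_addr K m).
set X := n `^ (-1 + alpha^-1).
have b1 : m%:R * n^-1 <= X.
  rewrite /X pow_beta // mulrC ler_wpM2l // invr_ge0; lra.
have b2 : m%:R `^ (-(alpha-1)) <= (2^-1) `^ (-(alpha-1)) * X.
  have hs : s * 2^-1 <= m%:R.
    have : (m.+1%:R : R) = m%:R + 1 by rewrite -natr1.
    have : 1 <= m%:R :> R by rewrite ler1n.
    lra.
  apply: le_trans (pow_anti _ hs _) _.
  - by apply: mulr_gt0; lra.
  - lra.
  rewrite powRM; last 2 first.
  - lra.
  - lra.
  by rewrite /X /s pow_beta2 // mulrC.
set T1 := \sum_(m <= i < m + K) _ in T *.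
set P2 := (2^-1) `^ (-(alpha-1)) in b2 *.
have a0 : 0 < alpha - 1 by lra.
have T2 : T1 <= P2 * X / (alpha - 1).
  apply: le_trans T _; rewrite ler_pM2r ?invr_gt0 //.
have T3 : C * T1 <= C * (P2 * X / (alpha - 1)) by rewrite ler_pM2l.
have -> : (1 + C * P2 / (alpha - 1)) * X = X + C * (P2 * X / (alpha - 1)).
  field; lra.
lra.
Qed.


Lemma sum_window (R : realType) (g : nat -> R) (a b K : nat) :
  (forall j, 0 <= g j) -> (a <= b)%N -> (b <= K)%N ->
  \sum_(a <= i < b) g i <= \sum_(i < K) g i.
Proof.
move=> g0 ab bK; rewrite -(big_mkord xpredT).
rewrite (@big_cat_nat _ _ _ b 0 K) //=.
rewrite (@big_cat_nat _ _ _ a 0 b) //=.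
have : 0 <= \sum_(0 <= i < a) g i by apply: sumr_ge0 => i _.
have : 0 <= \sum_(b <= i < K) g i by apply: sumr_ge0 => i _.
lra.
Qed.

Lemma lsame_lower (R : realType) (alpha c C : R) (N K : nat) (p : 'I_K -> R) :
  1 < alpha -> 0 < c -> 0 < C -> (2 <= N)%N -> 1 <= C * N%:R ->
  4 * (C * N%:R) `^ alpha^-1 <= K%:R -> simplex p ->
  (forall i : 'I_K, c * i.+1%:R `^ (-alpha) <= p i <= C * i.+1%:R `^ (-alpha)) ->
  c * expR (-2) * 2 `^ (-alpha) * 2 `^ (-(alpha - 1)) * C `^ (-1 + alpha^-1)
    * N%:R `^ (-1 + alpha^-1) <= Lsame N p.
Proof.
move=> a1 c0 C0 N2 Cn1 hK [p0 psum] pb.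
set n : R := N%:R in Cn1 hK *.
have n0 : 0 < n.
  have : 0 <= n by rewrite /n ler0n.
  nra.
set t := (C * n) `^ alpha^-1 in hK *.
have t1 : 1 <= t.
  rewrite /t -(powRr0 (C * n)); apply: ler_powR => //; rewrite invr_ge0; lra.
set m := (Num.truncn t).+1.
have /andP[tm1 tm2] : (Num.truncn t)%:R <= t < m%:R by apply: truncn_itv; lra.
have mt : m%:R = (Num.truncn t)%:R + 1 :> R by rewrite /m -natr1.
have m2K : (2 * m <= K)%N.
  rewrite -(ler_nat R) natrM; lra.
have m0 : (0 < m)%N by [].
set D := c * (2 * m%:R) `^ (-alpha) * expR (-2).
set g := fun j : nat => if (m <= j < 2 * m)%N then D else 0.
have D0 : 0 <= D by rewrite /D !mulr_ge0 ?expR_ge0 ?powR_ge0 //; lra.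
have g0 : forall j, 0 <= g j by move=> j; rewrite /g; case: ifP.
have tinv : C * t `^ (-alpha) = n^-1.
  rewrite /t -powRrM (_ : alpha^-1 * - alpha = -1); last by field; lra.
  rewrite powR_inv1; last by apply: mulr_ge0; lra.
  rewrite invfM mulrA divff ?mul1r //; lra.
have stepA : \sum_(i < K) g i <= Lsame N p.
  rewrite /Lsame /LN; apply: ler_sum => i _; rewrite /g; case: ifP => hi; last first.
    apply: mulr_ge0 => //; apply: exprn_ge0; rewrite subr_ge0.
    by rewrite -psum; apply: le_sum_single.
  case/andP: hi => mi i2m.
  have /andP[pl pu] := pb i.
  have hpn : p i <= n^-1.
    apply: le_trans pu _; rewrite -tinv ler_pM2l //.
    apply: pow_anti; [lra | | lra].
    apply: le_trans (ltW tm2) _; rewrite ler_nat; exact: leq_trans mi _.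
  have n2 : 2 <= n by rewrite /n ler_nat.
  have hp2 : p i <= 2^-1.
    apply: le_trans hpn _; rewrite lef_pV2 ?posrE //; lra.
  have e1 : expR (-2) <= (1 - p i) ^+ N.
    apply: le_trans (exp_le_pow _ _); last by rewrite p0 hp2.
    rewrite ler_expR lerN2 -mulrA; rewrite -/n.
    have : n * p i <= 1.
      rewrite -(divff (lt0r_neq0 n0)); apply: ler_wpM2l => //; exact: ltW.
    lra.
  have e2 : c * (2 * m%:R) `^ (-alpha) <= p i.
    apply: le_trans pl; rewrite ler_pM2l //; apply: pow_anti; first by rewrite ltr0n.
      rewrite -natrM ler_nat; exact: i2m.
    lra.
  rewrite /D; apply: ler_pM; [ | exact: expR_ge0 | exact: e2 | exact: e1].
  by rewrite mulr_ge0 ?powR_ge0 //; lra.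
apply: le_trans stepA.
have W : m%:R * D <= \sum_(i < K) g i.
  apply: le_trans (sum_window (a := m) (b := 2 * m) g0 _ m2K); last by rewrite leq_pmull.
  rewrite (eq_big_nat _ _ (F2 := fun=> D)); last by move=> i hi; rewrite /g hi.
  rewrite sumr_const_nat mulr_natl.
  by rewrite (_ : (2 * m - m = m)%N) // mul2n -addnn addnK.
apply: le_trans W.
have mpos : 0 < m%:R :> R by rewrite ltr0n.
have mm : m%:R * m%:R `^ (-alpha) = m%:R `^ (-(alpha-1)).
  rewrite -{1}(powRr1 (ltW mpos)) -powRD' //; congr (_ `^ _); ring.
have pm : (2 * t) `^ (-(alpha-1)) <= m%:R `^ (-(alpha-1)).
  apply: pow_anti => //; lra.
have eT : (2 * t) `^ (-(alpha-1)) = 2 `^ (-(alpha-1)) * (C `^ (-1 + alpha^-1) * n `^ (-1 + alpha^-1)).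
  rewrite powRM; [ | lra | lra]; rewrite /t pow_beta2 //; last by apply: mulr_gt0.
  by rewrite (@powRM _ C n); [ | lra | lra].
have -> : c * expR (-2) * 2 `^ (- alpha) * 2 `^ (- (alpha - 1)) *
  C `^ (-1 + alpha^-1) * n `^ (-1 + alpha^-1) = (c * expR(-2) * 2 `^ (-alpha)) * (2 * t) `^ (-(alpha-1)).
  by rewrite eT; ring.
have -> : m%:R * D = (c * expR(-2) * 2 `^ (-alpha)) * m%:R `^ (-(alpha-1)).
  rewrite /D powRM; [ | lra | lra]; rewrite -mm; ring.
apply: ler_wpM2l => //.
by rewrite !mulr_ge0 ?expR_ge0 ?powR_ge0 //; lra.
Qed.


Lemma count_ind (R : realType) (K M : nat) : (M <= K)%N ->
  \sum_(i < K) (if (i < M)%N then 1 else 0 : R) = M%:R.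
Proof.
move=> MK; rewrite -(big_mkord xpredT (fun i => if (i < M)%N then 1 else 0 : R)).
rewrite (@big_cat_nat _ _ _ M 0 K) //=.
rewrite (eq_big_nat _ _ (F2 := fun=> 1)); last by move=> i /andP[_ ->].
rewrite sumr_const_nat subn0 big1_seq ?addr0 //.
move=> i /andP[_]; rewrite mem_index_iota => /andP[Mi _]; rewrite ltnNge Mi //.
Qed.

Lemma lstar_lower (R : realType) (alpha c k : R) (N K M : nat) (p q : 'I_K -> R) :
  1 < alpha -> 0 < c -> 0 < k -> (4 <= M)%N -> (M <= K)%N -> (M <= N)%N ->
  k * N%:R <= M%:R ->
  (forall i : 'I_K, c * i.+1%:R `^ (-alpha) <= p i) -> simplex q ->
  c / 2 * expR (- (4 / k)) * N%:R `^ (-(alpha - 1)) <= LN N p q.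
Proof.
move=> a1 c0 k0 M4 MK MN kNM pl [q0 qsum].
set n : R := N%:R in kNM *.
set Mr : R := M%:R in kNM *.
have Mr4 : 4 <= Mr by rewrite /Mr ler_nat.
have Mrn : Mr <= n by rewrite /Mr /n ler_nat.
set D := c * Mr `^ (-alpha) * expR (- (4 / k)).
have D0 : 0 <= D by rewrite /D !mulr_ge0 ?expR_ge0 ?powR_ge0 //; lra.
set f := fun i : 'I_K => D * (if (i < M)%N then 1 else 0) - D * (Mr / 2) * (if (i < M)%N then q i else 0).
have q1 : forall i, q i <= 1 by move=> i; rewrite -qsum; apply: le_sum_single.
have stepA : \sum_(i < K) f i <= LN N p q.
  rewrite /LN; apply: ler_sum => i _; rewrite /f.
  have t0 : 0 <= p i * (1 - q i) ^+ N.
    apply: mulr_ge0; last by apply: exprn_ge0; have := q1 i; lra.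
    apply: le_trans (pl i); rewrite mulr_ge0 ?powR_ge0 //; lra.
  case: ifP => iM; last by rewrite mulr0 mulr0 subr0.
  rewrite mulr1.
  have hM : 0 <= Mr / 2 by lra.
  have [qs|qb] := leP (q i) (2 / Mr); last first.
    apply: le_trans t0.
    have e : Mr / 2 * (2 / Mr) = 1 by field; lra.
    have := ler_wpM2l hM (ltW qb); rewrite e => hX.
    have : 0 <= D * (Mr / 2 * q i - 1) by apply: mulr_ge0 => //; lra.
    rewrite mulrBr mulr1 mulrA; lra.
  have hq2 : q i <= 2^-1.
    apply: le_trans qs _; rewrite ler_pdivrMr; lra.
  have nM : n / Mr <= k^-1.
    rewrite ler_pdivrMr; last lra.
    have e : k^-1 * (k * n) = n by field; lra.
    have ki : 0 <= k^-1 by rewrite invr_ge0 ltW.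
    have := ler_wpM2l ki kNM; rewrite e; lra.
  have e1 : expR (- (4 / k)) <= (1 - q i) ^+ N.
    apply: le_trans (exp_le_pow _ _); last by rewrite q0 hq2.
    rewrite ler_expR lerN2.
    have := ler_wpM2l (ler0n R N : 0 <= n) qs.
    rewrite -/n (_ : n * (2 / Mr) = 2 * (n / Mr)); last by rewrite mulrCA.
    move=> h1.
    have : 4 / k = 4 * k^-1 by [].
    lra.
  have e2 : c * Mr `^ (-alpha) <= p i.
    apply: le_trans (pl i); rewrite ler_pM2l //; apply: pow_anti; [by rewrite ltr0n | | lra].
    by rewrite /Mr ler_nat.
  have hD : D <= p i * (1 - q i) ^+ N.
    rewrite /D; apply: ler_pM; [ | exact: expR_ge0 | exact: e2 | exact: e1].
    by rewrite mulr_ge0 ?powR_ge0 //; lra.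
  have : 0 <= D * (Mr / 2) * q i by apply: mulr_ge0; [apply: mulr_ge0|].
  lra.
apply: le_trans stepA.
rewrite /f sumrB -!mulr_sumr count_ind //.
set X := \sum_(i < K) _.
have X1 : X <= 1.
  rewrite -qsum; apply: ler_sum => i _; case: ifP => _ //.
have Mpos : 0 < Mr by lra.
have mm : Mr * Mr `^ (-alpha) = Mr `^ (-(alpha-1)).
  rewrite -{1}(powRr1 (ltW Mpos)) -powRD' //; congr (_ `^ _); ring.
have pm : n `^ (-(alpha-1)) <= Mr `^ (-(alpha-1)) by apply: pow_anti => //; lra.
have h1 : c / 2 * expR (- (4 / k)) * n `^ (-(alpha - 1)) <= D * Mr / 2.
  rewrite /D (_ : c * Mr `^ (- alpha) * expR (- (4 / k)) * Mr / 2 =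
     c / 2 * expR (- (4 / k)) * (Mr * Mr `^ (- alpha))); last by ring.
  rewrite mm; apply: ler_wpM2l => //.
  apply: mulr_ge0; [lra | exact: expR_ge0].
have h2 : D * Mr / 2 <= D * Mr - D * (Mr / 2) * X.
  have : 0 <= D * (Mr / 2) * (1 - X) by apply: mulr_ge0; [apply: mulr_ge0|]; lra.
  lra.
lra.
Qed.


Lemma sum_first (R : realType) (K : nat) (x : R) : (0 < K)%N ->
  \sum_(i < K) (if (nat_of_ord i == 0)%N then x else 0) = x.
Proof.
move=> K0; rewrite -(big_mkord xpredT (fun i => if (i == 0)%N then x else 0)).
rewrite big_ltn //= big1_seq ?addr0 //.
by move=> i /andP[_]; rewrite mem_index_iota => /andP[hi _]; case: eqP hi => // ->.
Qed.

Lemma lstar_upper_q (R : realType) (alpha C : R) (N K m : nat) (p : 'I_K -> R) :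
  1 < alpha -> 0 < C -> (1 <= m)%N -> (m <= K)%N -> alpha * m%:R <= N%:R ->
  simplex p -> (forall i : 'I_K, p i <= C * i.+1%:R `^ (-alpha)) ->
  exists q, simplex q /\
    LN N p q <= C * (1 + (alpha - 1)^-1) * m%:R `^ (-(alpha - 1)).
Proof.
move=> a1 C0 m1 mK amN [p0 psum] pC.
set n : R := N%:R in amN *.
have mpos : 0 < m%:R :> R by rewrite ltr0n.
have m1r : 1 <= m%:R :> R by rewrite ler1n.
have n0 : 0 < n by nra.
set base := fun j : nat => if (j < m)%N then alpha / n * ln (m%:R / j.+1%:R) else 0.
have base0 : forall j, 0 <= base j.
  move=> j; rewrite /base; case: ifP => // jm.
  apply: mulr_ge0; first by apply: divr_ge0; lra.
  apply: ln_ge0; rewrite ler_pdivlMr ?ltr0n // mul1r ler_nat //.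
set S := \sum_(i < K) base i.
have S0 : 0 <= S by apply: sumr_ge0 => i _.
have Seq : S = alpha / n * \sum_(i < m) ln (m%:R / i.+1%:R).
  rewrite /S -(big_mkord xpredT base) (@big_cat_nat _ _ _ m 0 K) //=.
  rewrite [X in _ + X]big1_seq ?addr0; last first.
    by move=> i /andP[_]; rewrite mem_index_iota => /andP[hi _]; rewrite /base ltnNge hi.
  rewrite big_mkord mulr_sumr; apply: eq_bigr => i _; rewrite /base ltn_ord //.
have S1 : S <= 1.
  rewrite Seq; apply: le_trans (ler_wpM2l _ (lnsum R m)) _.
    by apply: divr_ge0; lra.
  by rewrite mulrAC ler_pdivrMr // mul1r.
set q := fun i : 'I_K => base i + (if (nat_of_ord i == 0)%N then 1 - S else 0).
have q0 : forall i, 0 <= q i.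
  move=> i; rewrite /q; apply: addr_ge0 => //; case: ifP => _; lra.
have qs : \sum_(i < K) q i = 1.
  rewrite /q big_split /= sum_first; [rewrite -/S; ring | exact: leq_trans m1 mK].
exists q; split; first by split.
have q1 : forall i, q i <= 1 by move=> i; rewrite -qs; apply: le_sum_single.
have bq : forall i : 'I_K, base i <= q i.
  by move=> i; rewrite /q lerDl; case: ifP => _; lra.
set h := fun j : nat => if (j < m)%N then C * m%:R `^ (-alpha) else C * j.+1%:R `^ (-alpha).
have h0 : forall j, 0 <= h j.
  by move=> j; rewrite /h; case: ifP => _; rewrite mulr_ge0 ?powR_ge0 // ltW.
have stepA : LN N p q <= \sum_(i < K) h i.
  rewrite /LN; apply: ler_sum => i _.
  have e0 : (1 - q i) ^+ N <= (1 - base i) ^+ N.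
    apply: lerXn2r; rewrite ?nnegrE; have := q1 i; have := bq i; lra.
  apply: le_trans (ler_wpM2l (p0 i) e0) _.
  rewrite /h; case: ifP => im; last first.
    apply: le_trans (pC i); apply: ler_piMr => //.
    apply: exprn_ile1; have := q1 i; have := bq i; have := base0 i; lra.
  have e1 : (1 - base i) ^+ N <= expR (- (n * base i)).
    apply: pow_le_exp; have := q1 i; have := bq i; have := base0 i.
    move=> *; apply/andP; split; lra.
  have kpos : 0 < i.+1%:R :> R by rewrite ltr0n.
  have e2 : expR (- (n * base i)) = (m%:R / i.+1%:R) `^ (-alpha).
    rewrite /base im (_ : - (n * (alpha / n * ln (m%:R / i.+1%:R))) = ln (m%:R / i.+1%:R) * (- alpha)).
      rewrite expRM lnK // posrE; exact: divr_gt0.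
    field; lra.
  apply: le_trans (ler_wpM2l (p0 i) e1) _.
  rewrite e2.
  apply: le_trans (ler_wpM2r (powR_ge0 _ _) (pC i)) _.
  rewrite -mulrA -powRM; [ | exact: ltW | apply: divr_ge0; exact: ltW].
  rewrite (_ : i.+1%:R * (m%:R / i.+1%:R) = m%:R :> R) //.
  by rewrite mulrC divfK // lt0r_neq0.
apply: le_trans stepA _.
apply: le_trans (sum_extend h0 (leq_addl m K)) _.
rewrite (@big_cat_nat _ _ _ m 0 (m+K)) //=; last exact: leq_addr.
have e1 : \sum_(0 <= i < m) h i = m%:R * (C * m%:R `^ (-alpha)).
  rewrite (eq_big_nat _ _ (F2 := fun=> C * m%:R `^ (-alpha))); first by rewrite sumr_const_nat subn0 mulr_natl.
  by move=> i /andP[_ im]; rewrite /h im.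
have e2 : \sum_(m <= i < m + K) h i = C * \sum_(m <= i < m + K) i.+1%:R `^ (-alpha).
  rewrite mulr_sumr; apply: eq_big_nat => i /andP[mi _]; rewrite /h ltnNge mi //.
rewrite e1 e2.
have T := tail_sum a1 m1 (leq_addr K m).
have mm : m%:R * m%:R `^ (-alpha) = m%:R `^ (-(alpha-1)).
  rewrite -{1}(powRr1 (ltW mpos)) -powRD' //; congr (_ `^ _); ring.
set T1 := \sum_(m <= i < m + K) _ in T *.
set P := m%:R `^ (-(alpha-1)) in mm T *.
have T3 : C * T1 <= C * (P / (alpha - 1)) by rewrite ler_pM2l.
have -> : m%:R * (C * m%:R `^ (- alpha)) = C * P by rewrite -mm; ring.
have -> : C * (1 + (alpha - 1)^-1) * P = C * P + C * (P / (alpha - 1)) by ring.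
lra.
Qed.

Local Open Scope classical_set_scope.

Lemma LN_ge0 (R : realType) (N K : nat) (p q : 'I_K -> R) :
  simplex p -> simplex q -> 0 <= LN N p q.
Proof.
move=> [p0 _] [q0 qs]; rewrite /LN; apply: sumr_ge0 => i _.
apply: mulr_ge0 => //; apply: exprn_ge0; rewrite subr_ge0 -qs.
exact: le_sum_single.
Qed.

Lemma le_trunc (R : realType) (x : R) (N : nat) :
  ((Num.truncn x).+1 <= N)%N -> x <= N%:R.
Proof.
move=> h; have [x0|x0] := ltP x 0; first by apply: le_trans (ltW x0) _; rewrite ler0n.
have /andP[_ h2] := truncn_itv x0.
by apply: le_trans (ltW h2) _; rewrite ler_nat.
Qed.

Unset Implicit Arguments.

Theorem corollary4p3 (R : realType) (alpha c C c0 : R) :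
  1 < alpha -> 0 < c -> c <= C -> 0 < c0 ->
  exists (A1 B1 A2 B2 : R) (N0 : nat),
    [/\ 0 < A1, 0 < B1, 0 < A2 & 0 < B2] /\
    forall (N K : nat) (p : 'I_K -> R),
      (2 <= N)%N -> (N0 <= N)%N ->
      c0 * N%:R <= K%:R ->
      @simplex R K p ->
      (forall i : 'I_K,
          c * (i.+1%:R) `^ (- alpha) <= p i <= C * (i.+1%:R) `^ (- alpha)) ->
      (A1 * N%:R `^ (-1 + alpha^-1) <= Lsame N p <= B1 * N%:R `^ (-1 + alpha^-1))
      /\ (A2 * N%:R `^ (1 - alpha) <= Lstar N p <= B2 * N%:R `^ (1 - alpha)).
Proof.
move=> a1 c0p cC c00.
have C0 : 0 < C by lra.
have a0 : 0 < alpha - 1 by lra.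
have ai0 : 0 < alpha^-1 by rewrite invr_gt0; lra.
set k3 := Num.min c0 1.
have k3p : 0 < k3 by rewrite /k3 lt_min c00 ltr01.
have k3c : k3 <= c0 by rewrite /k3 ge_min lexx.
have k31 : k3 <= 1 by rewrite /k3 ge_min lexx orbT.
set k4 := Num.min c0 (2 * alpha)^-1.
have k4p : 0 < k4 by rewrite /k4 lt_min c00 invr_gt0 /=; lra.
have k4c : k4 <= c0 by rewrite /k4 ge_min lexx.
have k4a : k4 <= (2 * alpha)^-1 by rewrite /k4 ge_min lexx orbT.
set b := 1 - alpha^-1.
have bp : 0 < b.
  rewrite /b subr_gt0 invf_lt1; lra.
set T := 4 * C `^ alpha^-1 / c0.
have T0 : 0 <= T by rewrite /T !mulr_ge0 ?powR_ge0 ?invr_ge0 //; lra.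
set X1 := C^-1.
set X2 := T `^ b^-1.
set X3 := 4 / k3.
set X4 := 2 * alpha.
exists (c * expR (-2) * 2 `^ (-alpha) * 2 `^ (-(alpha - 1)) * C `^ (-1 + alpha^-1)),
  (1 + C * (2^-1) `^ (-(alpha-1)) / (alpha - 1)),
  (c / 2 * expR (- (4 / k3))),
  (C * (1 + (alpha - 1)^-1) * k4 `^ (-(alpha - 1))),
  (maxn (maxn (Num.truncn X1) (Num.truncn X2)) (maxn (Num.truncn X3) (Num.truncn X4))).+1.
split.
  split.
  - by rewrite !mulr_gt0 ?expR_gt0 ?powR_gt0 //; lra.
  - have := powR_ge0 (2^-1 : R) (-(alpha - 1)).
    have : 0 <= C / (alpha - 1) by rewrite divr_ge0 //; lra.
    move=> h1 h2.
    have : 0 <= C * 2^-1 `^ (- (alpha - 1)) / (alpha - 1).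
      by rewrite mulrAC; apply: mulr_ge0.
    lra.
  - by rewrite !mulr_gt0 ?expR_gt0 //; lra.
  - rewrite !mulr_gt0 ?powR_gt0 //.
    have : 0 < (alpha - 1)^-1 by rewrite invr_gt0.
    lra.
move=> N K p N2 N0N hK hp hb.
set n : R := N%:R in hK *.
have hX1 : X1 <= n.
  apply: le_trunc; apply: leq_trans N0N; rewrite ltnS.
  exact: leq_trans (leq_maxl _ _) (leq_maxl _ _).
have hX2 : X2 <= n.
  apply: le_trunc; apply: leq_trans N0N; rewrite ltnS.
  exact: leq_trans (leq_maxr _ _) (leq_maxl _ _).
have hX3 : X3 <= n.
  apply: le_trunc; apply: leq_trans N0N; rewrite ltnS.
  exact: leq_trans (leq_maxl _ _) (leq_maxr _ _).
have hX4 : X4 <= n.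
  apply: le_trunc; apply: leq_trans N0N; rewrite ltnS.
  exact: leq_trans (leq_maxr _ _) (leq_maxr _ _).
have n2 : 2 <= n by rewrite /n ler_nat.
have N1 : (1 <= N)%N by apply: leq_trans N2.
have pu : forall i : 'I_K, p i <= C * i.+1%:R `^ (-alpha) by move=> i; case/andP: (hb i).
have pl : forall i : 'I_K, c * i.+1%:R `^ (-alpha) <= p i by move=> i; case/andP: (hb i).
split.
  apply/andP; split; last exact: lsame_upper.
  apply: lsame_lower => //.
  - have : C * X1 <= C * n by rewrite ler_pM2l.
    by rewrite /X1 divff ?lt0r_neq0.
  - have n0 : 0 < n by lra.
    have nb : T <= n `^ b.
      have : X2 `^ b <= n `^ b.
        by apply: ge0_ler_powR; rewrite ?nnegrE ?powR_ge0 //; lra.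
      by rewrite /X2 -powRrM mulVf ?lt0r_neq0 // powRr1.
    have en : n = n `^ alpha^-1 * n `^ b.
      have e1 : alpha^-1 + b = 1 by rewrite /b; ring.
      rewrite -powRD' // e1 powRr1 //; lra.
    have eC : (C * n) `^ alpha^-1 = C `^ alpha^-1 * n `^ alpha^-1 by rewrite powRM //; lra.
    apply: le_trans hK; rewrite eC.
    have eT : c0 * T = 4 * C `^ alpha^-1 by rewrite /T; field; lra.
    have := ler_wpM2l (powR_ge0 n alpha^-1) nb.
    have := powR_ge0 n alpha^-1.
    have := powR_ge0 C alpha^-1.
    move: (n `^ alpha^-1) (n `^ b) (C `^ alpha^-1) en eT => A B D en eT.
    rewrite {1}en.
    move=> *; nra.
have n0 : 0 < n by lra.
have ea : 1 - alpha = -(alpha - 1) by ring.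
rewrite ea.
have K1 : (1 <= K)%N.
  rewrite -(ltr_nat R); apply: lt_le_trans hK; rewrite mulr_gt0 //.
set tr := Num.truncn (n / alpha).
have na0 : 0 <= n / alpha by apply: divr_ge0; lra.
have /andP[tr1 tr2] := truncn_itv na0.
have na2 : 2 <= n / alpha.
  rewrite ler_pdivlMr; last lra.
  by move: hX4; rewrite /X4.
have trpos : (1 <= tr)%N by rewrite /tr truncn_ge_nat //; lra.
set m := minn K tr.
have m1 : (1 <= m)%N by rewrite leq_min K1 trpos.
have mK : (m <= K)%N by rewrite geq_minl.
have mtr : (m <= tr)%N by rewrite geq_minr.
have amN : alpha * m%:R <= n.
  have : m%:R <= n / alpha by apply: le_trans tr1; rewrite ler_nat.
  rewrite ler_pdivlMr; lra.
have mk4 : k4 * n <= m%:R.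
  have hK4 : k4 * n <= K%:R by apply: le_trans hK; rewrite ler_pM2r.
  have htr : k4 * n <= tr%:R.
    have : k4 * n <= (2 * alpha)^-1 * n by rewrite ler_pM2r.
    have : (2 * alpha)^-1 * n = (n / alpha) / 2 by field; lra.
    have : tr.+1%:R = tr%:R + 1 :> R by rewrite -natr1.
    lra.
  rewrite /m; have [h|h] := leqP K tr.
    by [].
  by [].
have [q [qs Lq]] := lstar_upper_q a1 C0 m1 mK amN hp pu.
set E := [set LN N p q | q in @simplex R K].
have Eq : E (LN N p q) by exists q.
have Elb : lbound E 0.
  by move=> y [q' q's <-]; apply: LN_ge0.
have mpos : 0 < m%:R :> R by rewrite ltr0n.
apply/andP; split; last first.
  apply: le_trans (ge_inf (ex_intro _ 0 Elb) Eq) _.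
  apply: le_trans Lq _.
  have : m%:R `^ (-(alpha - 1)) <= k4 `^ (-(alpha - 1)) * n `^ (-(alpha - 1)).
    rewrite -powRM; [ | lra | lra]; apply: pow_anti => //.
    by apply: mulr_gt0.
    lra.
  have : 0 <= C * (1 + (alpha - 1)^-1).
    apply: mulr_ge0; first lra.
    have : 0 < (alpha - 1)^-1 by rewrite invr_gt0.
    lra.
  move: (C * (1 + (alpha - 1)^-1)) (m%:R `^ (-(alpha - 1))) => A B h1 h2.
  rewrite -mulrA; exact: ler_wpM2l.
apply: lb_le_inf; first by exists (LN N p q).
move=> y [q' q's <-].
set M := minn K N.
have MK : (M <= K)%N by rewrite geq_minl.
have MN : (M <= N)%N by rewrite geq_minr.
have k3n : 4 <= k3 * n.
  have : X3 = 4 / k3 by [].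
  move=> e; rewrite e ler_pdivrMr // in hX3; lra.
have kM : k3 * n <= M%:R.
  rewrite /M; have [h|h] := leqP K N.
    apply: le_trans hK; rewrite ler_pM2r //.
  rewrite -/n; have := ler_pM2r n0 k3 1; rewrite mul1r => ->; lra.
have M4 : (4 <= M)%N by rewrite -(ler_nat R); lra.
exact: lstar_lower a1 c0p k3p M4 MK MN kM pl q's.
Qed.
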